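(* Let $f_i:\mathbb{R}^p\to\mathbb{R}$, $1\le i\le n$, be $L_i$-smooth for some $L_i>0$, and suppose $f=\frac1n\sum_{i=1}^nf_i$ takes the form $f(x)=g(Hx)$ for an $\alpha$-strongly convex and $\mathbf{L}$-smooth function $g:\mathbb{R}^m\to\mathbb{R}$ and $H\in\mathbb{R}^{m\times p}$. Then $L:=\max_{1\le i\le n}L_i$ satisfies $L\ge\alpha\|H\|_2^2$.
   Context: $h$ is $L$-smooth if $\|\nabla h(x)-\nabla h(y)\|\le L\|x-y\|$ for all $x,y$; $\alpha$-strongly convex ($\alpha\ge 0$) if $h(y)\ge h(x)+\langle y-x,\nabla h(x)\rangle+\frac\alpha2\|y-x\|^2$ for all $x,y$. $\|H\|_2=\sup_{x\ne0}\|Hx\|/\|x\|$ with Euclidean norms. *)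

(* Defs.v *)
From HB Require Import structures.
From mathcomp Require Import all_boot all_order all_algebra.
From mathcomp Require Import all_classical all_reals all_analysis.
Set Implicit Arguments. Unset Strict Implicit. Unset Printing Implicit Defensive.
Import Order.TTheory GRing.Theory Num.Theory.
Import numFieldNormedType.Exports.
Local Open Scope ring_scope.
Local Open Scope classical_set_scope.

Section Defs.
Variable R : realType.

Definition dotv {p : nat} (u v : 'cV[R]_p) : R := \sum_(i < p) u i 0 * v i 0.
Definition enorm {p : nat} (u : 'cV[R]_p) : R := Num.sqrt (dotv u u).

Definition gradient {p : nat} (h : 'cV[R]_p -> R) (x : 'cV[R]_p) : 'cV[R]_p :=
  \col_(i < p) ('d h x (delta_mx i 0 : 'cV[R]_p)).

Definition L_smooth {p : nat} (h : 'cV[R]_p -> R) (L : R) : Prop :=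
  (forall x, differentiable h x) /\
  forall x y, enorm (gradient h x - gradient h y) <= L * enorm (x - y).

Definition strongly_convex {p : nat} (h : 'cV[R]_p -> R) (alpha : R) : Prop :=
  0 <= alpha /\
  forall x y, h y >= h x + dotv (y - x) (gradient h x) + alpha / 2 * enorm (y - x) ^+ 2.

Definition opnorm2 {m p : nat} (H : 'M[R]_(m, p)) : R :=
  sup [set enorm (H *m x) / enorm x | x in [set x : 'cV[R]_p | x != 0]].

End Defs.

(* Main.v *)
Require Import Defs.
From HB Require Import structures.
From mathcomp Require Import all_boot all_order all_algebra.
From mathcomp Require Import all_classical all_reals all_analysis.
Import Order.TTheory GRing.Theory Num.Theory.
Import numFieldNormedType.Exports.
Local Open Scope ring_scope.

Lemma dE (R : realType) p (h : 'cV[R]_p -> R) x v :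
  'd h x v = dotv v (gradient h x).
Proof.
rewrite {1}(matrix_sum_delta v) linear_sum /dotv; apply: eq_bigr => i _.
by rewrite big_ord1 linearZ /= mxE.
Qed.

Lemma Dcomp (R : realType) m p (g : 'cV[R]_m -> R) (H : 'M[R]_(m,p)) x v :
  'D_v (fun y => g (H *m y)) x = 'D_(H *m v) g (H *m x).
Proof.
rewrite /derive /=.
by under eq_fun => h do rewrite mulmxDr -scalemxAr.
Qed.

Lemma DF (R : realType) n p (fs : 'I_n -> 'cV[R]_p -> R) (k : R) x v :
  (forall i, differentiable (fs i) x) ->
  'D_v (fun y => k * \sum_(i < n) fs i y) x = k * \sum_(i < n) 'd (fs i) x v.
Proof.
move=> hd.
have hi : forall i, is_derive x v (fs i) ('d (fs i) x v).
  move=> i; apply: DeriveDef; first exact: diff_derivable.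
  exact: deriveE.
have := is_deriveZ k (is_derive_sum hi) => /(@derive_val _ _ _ _ _ _ _) HH.
rewrite -[RHS]HH.
congr derive; apply: funext => y /=.
by rewrite fct_sumE.
Qed.

From mathcomp Require Import lra.

Section dotv_lemmas.
Variable R : realType.
Variable p : nat.
Implicit Types (u v w : 'cV[R]_p).

Lemma dotvBr u v w : dotv u (v - w) = dotv u v - dotv u w.
Proof. by rewrite /dotv -sumrB; apply: eq_bigr => i _; rewrite !mxE mulrBr. Qed.

Lemma dotv0Nl u v : dotv (0 - u) v = - dotv u v.
Proof. by rewrite /dotv -sumrN; apply: eq_bigr => i _; rewrite !mxE; lra. Qed.

Lemma dotvNN u : dotv (0 - u) (0 - u) = dotv u u.
Proof. by rewrite /dotv; apply: eq_bigr => i _; rewrite !mxE; lra. Qed.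

Lemma dotv_ge0 u : 0 <= dotv u u.
Proof. by apply: sumr_ge0 => i _; rewrite -expr2 sqr_ge0. Qed.

Lemma enorm_sq u : enorm u ^+ 2 = dotv u u.
Proof. by rewrite /enorm sqr_sqrtr // dotv_ge0. Qed.

Lemma enorm_ge0 u : 0 <= enorm u.
Proof. exact: sqrtr_ge0. Qed.

Lemma dotv_gt0 u : u != 0 -> 0 < dotv u u.
Proof.
move=> hu; rewrite lt_neqAle dotv_ge0 andbT eq_sym; apply/negP => /eqP h.
move/negP: hu; apply; apply/eqP/matrixP => i j.
rewrite (ord1 j) mxE.
have hpos : forall k : 'I_p, true -> 0 <= u k 0 * u k 0.
  by move=> k _; rewrite -expr2 sqr_ge0.
have := @psumr_eq0P _ _ _ _ hpos h i isT.
by move=> /eqP; rewrite mulf_eq0 orbb => /eqP.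
Qed.

Lemma amgm u w c : 0 < c -> dotv w w <= c ^+ 2 * dotv u u -> dotv u w <= c * dotv u u.
Proof.
move=> c0 hw.
have h : 0 <= c ^+ 2 * dotv u u - 2 * c * dotv u w + dotv w w.
  have -> : c ^+ 2 * dotv u u - 2 * c * dotv u w + dotv w w =
     \sum_(i < p) (c * u i 0 - w i 0) ^+ 2.
    rewrite /dotv !mulr_sumr -sumrB -big_split; apply: eq_bigr => i _ /=; lra.
  by apply: sumr_ge0 => i _; rewrite sqr_ge0.
have : 2 * c * dotv u w <= 2 * c * (c * dotv u u) by lra.
by rewrite ler_pM2l; lra.
Qed.
End dotv_lemmas.


Lemma dotv_swapl (R : realType) p (a b w : 'cV[R]_p) : dotv (a - b) w = - dotv (b - a) w.
Proof. by rewrite /dotv -sumrN; apply: eq_bigr => i _; rewrite !mxE; lra. Qed.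

Lemma dotv_swap2 (R : realType) p (a b : 'cV[R]_p) : dotv (a - b) (a - b) = dotv (b - a) (b - a).
Proof. by rewrite /dotv; apply: eq_bigr => i _; rewrite !mxE; lra. Qed.

Lemma aux_sc (R : realType) (ga gb d1 d2 d3 alpha : R) :
  ga + d1 + alpha / 2 * d3 <= gb -> gb - d2 + alpha / 2 * d3 <= ga ->
  alpha * d3 <= d2 - d1.
Proof. move=> *; lra. Qed.

Lemma sc_mono (R : realType) m (g : 'cV[R]_m -> R) alpha :
  strongly_convex g alpha -> forall a b : 'cV[R]_m,
  alpha * dotv (b - a) (b - a) <= dotv (b - a) (gradient g b - gradient g a).
Proof.
move=> [_ sc] a b; have s1 := sc a b; have s2 := sc b a.
rewrite !enorm_sq in s1 s2.
rewrite dotv_swap2 (@dotv_swapl _ _ a b (gradient g b)) in s2.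
rewrite (@dotvBr _ _ (b - a) (gradient g b) (gradient g a)).
exact: aux_sc s1 s2.
Qed.

Lemma core (R : realType) n p m (H : 'M[R]_(m,p)) (gg : 'cV[R]_m -> 'cV[R]_m)
  (gf : 'I_n -> 'cV[R]_p -> 'cV[R]_p) (Ls : 'I_n -> R) (alpha L : R) :
  (0 < n)%N -> (forall i, 0 < Ls i) -> (forall i, Ls i <= L) ->
  (forall i x y, enorm (gf i x - gf i y) <= Ls i * enorm (x - y)) ->
  (forall a b : 'cV[R]_m, alpha * dotv (b - a) (b - a) <= dotv (b - a) (gg b - gg a)) ->
  (forall x v, dotv (H *m v) (gg (H *m x)) = n%:R^-1 * \sum_(i < n) dotv v (gf i x)) ->
  forall z, alpha * dotv (H *m z) (H *m z) <= L * dotv z z.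
Proof.
move=> n0 Lpos LsL lip mono hgrad z.
have hgB : forall x y v, dotv (H *m v) (gg (H *m y) - gg (H *m x)) =
    n%:R^-1 * \sum_(i < n) dotv v (gf i y - gf i x).
  move=> x y v; rewrite dotvBr hgrad hgrad -mulrBr -sumrB; congr (_ * _).
  by apply: eq_bigr => i _; rewrite dotvBr.
have h1 := mono (H *m 0) (H *m z).
have e : H *m z - H *m 0 = H *m z by rewrite mulmx0 subr0.
rewrite e hgB in h1.
apply: le_trans h1 _.
have n0' : (0 : R) < n%:R by rewrite ltr0n.
have -> : L * dotv z z = n%:R^-1 * \sum_(i < n) (L * dotv z z).
  by rewrite sumr_const card_ord -[L * _ *+ n]mulr_natl mulKf // gt_eqF.
rewrite ler_pM2l ?invr_gt0 //; apply: ler_sum => i _.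
apply: (@le_trans _ _ (Ls i * dotv z z)); last first.
  by apply: ler_wpM2r; [exact: dotv_ge0 | exact: LsL].
apply: amgm => //.
have := lip i z 0; rewrite subr0 => hl.
rewrite -!enorm_sq expr2 [_ ^+ 2]expr2 mulrACA.
by apply: ler_pM => //; apply: enorm_ge0.
Qed.

Section OB.
Local Open Scope classical_set_scope.
Lemma opnorm_bound (R : realType) m p (H : 'M[R]_(m,p)) alpha L :
  0 <= alpha -> 0 < L -> (forall z, alpha * dotv (H *m z) (H *m z) <= L * dotv z z) ->
  alpha * opnorm2 H ^+ 2 <= L.
Proof.
move=> a0 L0 key.
have [->|ap] := eqVneq alpha 0; first by rewrite mul0r ltW.
have apos : 0 < alpha by rewrite lt_neqAle eq_sym ap a0.
rewrite /opnorm2; set S := (X in sup X).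
set s := Num.sqrt (L / alpha).
have s0 : 0 <= s by exact: sqrtr_ge0.
have La : 0 <= L / alpha by rewrite divr_ge0 // ltW.
have elem : forall e, S e -> 0 <= e /\ e <= s.
  move=> e [x xn0 <-].
  have hx : 0 < dotv x x by apply: dotv_gt0.
  have e0 : 0 <= enorm (H *m x) / enorm x by rewrite divr_ge0 // enorm_ge0.
  split => //.
  suff h : (enorm (H *m x) / enorm x) ^+ 2 <= s ^+ 2.
    by move: h; rewrite ler_sqr ?nnegrE.
  rewrite sqr_sqrtr // expr_div_n !enorm_sq.
  rewrite ler_pdivrMr // mulrAC ler_pdivlMr // [_ * alpha]mulrC.
  exact: key.
have [Sne|S0] := pselect (S !=set0); last first.
  rewrite (_ : S = set0) ?sup0 ?expr0n /= ?mulr0 ?ltW //.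
  by apply/seteqP; split => x // Sx; apply: S0; exists x.
have ub : ubound S s by move=> e' /elem [].
have hs : sup S <= s := ge_sup Sne ub.
have hs0 : 0 <= sup S.
  case: Sne => e Se; apply: le_trans (elem e Se).1 _.
  exact: (ub_le_sup (ex_intro _ s ub) Se).
apply: (@le_trans _ _ (alpha * s ^+ 2)).
  by rewrite ler_pM2l // ler_sqr ?nnegrE.
by rewrite sqr_sqrtr // mulrC divfK // gt_eqF.
Qed.
End OB.

Theorem lemma2p13 (R : realType) (n p m : nat) (fs : 'I_n -> 'cV[R]_p -> R)
  (Ls : 'I_n -> R) (g : 'cV[R]_m -> R) (alpha Lg : R) (H : 'M[R]_(m, p)) :
  (0 < n)%N ->
  (forall i, 0 < Ls i) ->
  (forall i, L_smooth (fs i) (Ls i)) ->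
  strongly_convex g alpha ->
  L_smooth g Lg ->
  (forall x : 'cV[R]_p, (n%:R)^-1 * \sum_(i < n) fs i x = g (H *m x)) ->
  \big[Num.max/0]_(i < n) Ls i >= alpha * opnorm2 H ^+ 2.
Proof.
move=> n0 Lpos fsm [a0 sc] [gd _] hF.
set L := \big[Num.max/0]_(i < n) Ls i.
have LsL : forall i, Ls i <= L by move=> i; exact: le_bigmax.
have L0 : 0 < L by apply: lt_le_trans (LsL (Ordinal n0)); apply: Lpos.
have hgrad : forall x v, dotv (H *m v) (gradient g (H *m x)) =
    n%:R^-1 * \sum_(i < n) dotv v (gradient (fs i) x).
  move=> x v; rewrite -dE -deriveE // -Dcomp.
  rewrite (_ : (fun y => g (H *m y)) = fun y => n%:R^-1 * \sum_(i < n) fs i y);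
    last by apply: funext => y; rewrite hF.
  rewrite DF; last by move=> i; case: (fsm i).
  by congr (_ * _); apply: eq_bigr => i _; rewrite dE.
have key := @core R n p m H (gradient g) (fun i => gradient (fs i)) Ls alpha L
  n0 Lpos LsL (fun i => (fsm i).2) (@sc_mono R m g alpha (conj a0 sc)) hgrad.
exact: (@opnorm_bound R m p H alpha L a0 L0 key).
Qed.
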